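(* Let $\Phi$ be any one of the three homomorphisms $\Psi,\Psi^+,\Psi^-:\mathsf{PGL}_2(\mathbb Z)\to\mathsf{PGL}_2(\mathbb C(q))$ defined by $\Phi(T)=\begin{bmatrix}q&1\\0&1\end{bmatrix}$ and $$\Psi(S)=\begin{bmatrix}0&-1\\ q&0\end{bmatrix},\ \Psi(V)=\begin{bmatrix}q&1-q\\ q-q^2&-q\end{bmatrix};\qquad \Psi^{\pm}(S)=\begin{bmatrix}1&q^{-1}\\ -q+\omega^{\pm1}&-1\end{bmatrix},\ \Psi^{\pm}(V)=\begin{bmatrix}1&\frac{1+q^{-1}}{q-\omega^{\pm1}}\\ 1-q&-1\end{bmatrix}.$$ Then there is no map $\psi:\mathsf P^1(\mathbb Z)\to\mathsf P^1(\mathbb C(q))$ satisfying $\psi(gx)=\Phi(g)\psi(x)$ for all $g\in\mathsf{PGL}_2(\mathbb Z)$ and $x\in\mathsf P^1(\mathbb Z)$. (Indeed $\psi(1)$ would have to be a fixed point of $\Phi(U)$, $U(x)=1/x$, and these fixed points involve $\sqrt{q^2-q+1}\notin\mathbb C(q)$.)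
   Context: $\omega=e^{2\pi i/6}$. An invertible matrix $\begin{bmatrix}a&b\\c&d\end{bmatrix}$ denotes the Möbius map $x\mapsto(ax+b)/(cx+d)$. In $\mathsf{PGL}_2(\mathbb Z)$: $T(x)=1+x$, $S(x)=-1/x$, $V(x)=-x$, which generate it; $\mathsf P^1(\mathbb Z)=\mathbb Q\cup\{\infty\}$ and $\mathsf P^1(\mathbb C(q))=\mathbb C(q)\cup\{\infty\}$ with Möbius actions. *)

(* Defs.v *)
(* C is modelled as R[i] = complex R for a real field R : realType
   (the genuine complex numbers arise for R = the reals); C(q) = {fraction {poly C}}. *)
From HB Require Import structures.
From mathcomp Require Import all_boot all_order all_algebra.
From mathcomp Require Import reals.
From mathcomp Require Export complex.
Set Implicit Arguments. Unset Strict Implicit. Unset Printing Implicit Defensive.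
Import Order.TTheory GRing.Theory Num.Theory.
Local Open Scope ring_scope.

(* P^1(K) = K ∪ {∞}, with None = ∞. *)
Definition P1 (K : Type) := option K.

Definition mob (K : fieldType) (A : 'M[K]_2) (x : P1 K) : P1 K :=
  let a := A 0 0 in let b := A 0 1 in let c := A 1 0 in let d := A 1 1 in
  match x with
  | Some y => if c * y + d != 0 then Some ((a * y + b) / (c * y + d)) else None
  | None => if c != 0 then Some (a / c) else None
  end.

Definition mx2 (K : pzRingType) (a b c d : K) : 'M[K]_2 :=
  \matrix_(i < 2, j < 2)
    (if i == 0 then (if j == 0 then a else b) else (if j == 0 then c else d)).

(* Elements of GL_2(Z); PGL_2(Z) = GL_2(Z)/{±I}. *)
Definition GL2Z (g : 'M[int]_2) : Prop := \det g = 1 \/ \det g = -1.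

(* Möbius action of an integer matrix on P^1(Z) = Q ∪ {∞}. *)
Definition mobZ (g : 'M[int]_2) (x : P1 rat) : P1 rat := mob (map_mx intr g) x.

Definition Tz : 'M[int]_2 := mx2 1 1 0 1.
Definition Sz : 'M[int]_2 := mx2 0 (-1) 1 0.
Definition Vz : 'M[int]_2 := mx2 (-1) 0 0 1.

(* Equality in PGL_2(K): proportional by a nonzero scalar. *)
Definition projeq (K : fieldType) (A B : 'M[K]_2) : Prop :=
  exists c : K, c != 0 /\ A = c *: B.

Section Cq.
Variable R : realType.
Local Open Scope complex_scope.
Definition CC := R[i].
Definition Cq := {fraction {poly CC}}.

(* omega = e^{2 pi i/6} = 1/2 + i sqrt(3)/2 *)
Definition omega : CC := (1 / 2) +i* (Num.sqrt 3 / 2).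

Definition qF : Cq := @FracField.tofrac _ ('X : {poly CC}).
Definition cst (c : CC) : Cq := @FracField.tofrac _ (c%:P).

Inductive which := Psi | PsiPlus | PsiMinus.

Definition om (w : which) : CC :=
  match w with PsiPlus => omega | _ => omega^-1 end.

Definition PhiT (w : which) : 'M[Cq]_2 := mx2 qF 1 0 1.
Definition PhiS (w : which) : 'M[Cq]_2 :=
  match w with
  | Psi => mx2 0 (-1) qF 0
  | _ => mx2 1 qF^-1 (- qF + cst (om w)) (-1)
  end.
Definition PhiV (w : which) : 'M[Cq]_2 :=
  match w with
  | Psi => mx2 qF (1 - qF) (qF - qF ^+ 2) (- qF)
  | _ => mx2 1 ((1 + qF^-1) / (qF - cst (om w))) (1 - qF) (-1)
  end.

(* Phi : GL_2(Z) -> GL_2(C(q)) inducing a homomorphism PGL_2(Z) -> PGL_2(C(q))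
   with the prescribed images of the generators T, S, V. *)
Definition is_Phi (w : which) (Phi : 'M[int]_2 -> 'M[Cq]_2) : Prop :=
  (forall g, GL2Z g -> \det (Phi g) != 0) /\
  (forall g h, GL2Z g -> GL2Z h -> projeq (Phi (g *m h)) (Phi g *m Phi h)) /\
  projeq (Phi (- 1%:M)) 1%:M /\
  projeq (Phi Tz) (PhiT w) /\
  projeq (Phi Sz) (PhiS w) /\
  projeq (Phi Vz) (PhiV w).
End Cq.

(* Main.v *)
Require Import Defs.
From HB Require Import structures.
From mathcomp Require Import all_boot all_order all_algebra.
From mathcomp Require Import reals complex ring lra.
Import Order.TTheory GRing.Theory Num.Theory.
Local Open Scope ring_scope.
Local Open Scope quotient_scope.

Section Mx.
Variable K : pzRingType.
Lemma mx2_00 (a b c d : K) : mx2 a b c d 0 0 = a. Proof. by rewrite /mx2 !mxE. Qed.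
Lemma mx2_01 (a b c d : K) : mx2 a b c d 0 1 = b. Proof. by rewrite /mx2 !mxE. Qed.
Lemma mx2_10 (a b c d : K) : mx2 a b c d 1 0 = c. Proof. by rewrite /mx2 !mxE. Qed.
Lemma mx2_11 (a b c d : K) : mx2 a b c d 1 1 = d. Proof. by rewrite /mx2 !mxE. Qed.
Definition mx2E := (mx2_00, mx2_01, mx2_10, mx2_11).

Lemma mulmx2 (a b c d a' b' c' d' : K) :
  mx2 a b c d *m mx2 a' b' c' d' =
  mx2 (a * a' + b * c') (a * b' + b * d') (c * a' + d * c') (c * b' + d * d').
Proof.
apply/matrixP => i j; rewrite !mxE !big_ord_recr big_ord0 /= add0r !mxE.
by case: i => [[|[|?]] ?] //=; case: j => [[|[|?]] ?].
Qed.
End Mx.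

Lemma det2 (K : comPzRingType) (a b c d : K) : \det (mx2 a b c d) = a * d - b * c.
Proof.
rewrite (expand_det_row _ 0) !big_ord_recr big_ord0 /= add0r /cofactor !det_mx11 !mxE /=.
by rewrite expr0 expr1 mul1r mulN1r mulrN.
Qed.

Lemma map_mx2 (K L : pzRingType) (f : K -> L) (a b c d : K) :
  map_mx f (mx2 a b c d) = mx2 (f a) (f b) (f c) (f d).
Proof.
apply/matrixP => i j; rewrite !mxE.
by case: i => [[|[|?]] ?] //=; case: j => [[|[|?]] ?].
Qed.

Lemma mob_scale (K : fieldType) (k : K) (A : 'M[K]_2) x :
  k != 0 -> mob (k *: A) x = mob A x.
Proof.
move=> k0; case: x => [y|]; rewrite /mob !mxE.
  have e1 : k * A 1 0 * y + k * A 1 1 = k * (A 1 0 * y + A 1 1) by ring.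
  have e0 : k * A 0 0 * y + k * A 0 1 = k * (A 0 0 * y + A 0 1) by ring.
  rewrite e1 e0 mulf_eq0 negb_or k0 /=; case: ifP => // _.
  by rewrite invfM mulrACA divff // mul1r.
rewrite mulf_eq0 negb_or k0 /=; case: ifP => // _.
by rewrite invfM mulrACA divff // mul1r.
Qed.

Lemma mob_scale3 (K : fieldType) (A B : 'M[K]_2) x k1 k2 k3 :
  k1 != 0 -> k2 != 0 -> k3 != 0 ->
  mob (k1 *: (k2 *: A *m (k3 *: B))) x = mob (A *m B) x.
Proof.
move=> h1 h2 h3; rewrite -scalemxAl -scalemxAr !scalerA mob_scale //.
by rewrite !mulf_neq0.
Qed.

Lemma fix_quad (K : fieldType) (A : 'M[K]_2) x : A 1 0 != 0 -> mob A x = x ->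
  exists y, A 1 0 * y ^+ 2 + (A 1 1 - A 0 0) * y - A 0 1 = 0.
Proof.
move=> c0; case: x => [y|]; rewrite /mob; last by rewrite c0.
case: ifP => // h [E]; exists y.
have E' : A 0 0 * y + A 0 1 = y * (A 1 0 * y + A 1 1).
  by apply/esym; rewrite -{1}E divfK // h.
have -> : A 1 0 * y ^+ 2 + (A 1 1 - A 0 0) * y - A 0 1 =
  y * (A 1 0 * y + A 1 1) - (A 0 0 * y + A 0 1) by ring.
by rewrite -E' subrr.
Qed.

Lemma omega_rel (R : realType) : (omega R)^+2 - omega R + 1 = 0.
Proof.
rewrite /omega expr2; apply/eqP; rewrite eq_complex /=.
have hs : Num.sqrt (3:R) * Num.sqrt 3 = 3.
  by rewrite -expr2 sqr_sqrtr // ler0n.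
apply/andP; split; apply/eqP.
  have -> : Num.sqrt (3:R) / 2 * (Num.sqrt 3 / 2) = (Num.sqrt 3 * Num.sqrt 3) / 4 by field.
  by rewrite hs; field.
by field.
Qed.

Lemma rel_neq0 (F : fieldType) (a : F) : a ^+ 2 - a + 1 = 0 -> a != 0.
Proof. by move=> h; apply/eqP => a0; move: h; rewrite a0 expr2 !mul0r subr0 add0r => /eqP; rewrite oner_eq0. Qed.

Lemma rel_neq1 (F : fieldType) (a : F) : a ^+ 2 - a + 1 = 0 -> 1 - a != 0.
Proof. by move=> h; rewrite subr_eq0; apply/eqP => a0; move: h; rewrite -a0 expr1n subrr add0r => /eqP; rewrite oner_eq0. Qed.

Lemma om_rel (R : realType) w : (om R w)^+2 - om R w + 1 = 0.
Proof.
have h := omega_rel R; have h0 := @rel_neq0 _ _ h.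
have e : (omega R)^-1 ^+ 2 - (omega R)^-1 + 1 = ((omega R)^+2 - omega R + 1) / (omega R)^+2.
  by field.
by case: w => //=; rewrite e h mul0r.
Qed.
Lemma desc (F : fieldType) (a b : F) : a != b -> forall n d : {poly F},
  n^+2 = ('X - a%:P)*('X - b%:P) * d^+2 -> d = 0.
Proof.
move=> ab n d; elim: {d}(size d) {-2}d (leqnn (size d)) n => [|k IH] d Hd n E.
  by apply/eqP; rewrite -size_poly_eq0 -leqn0.
have ra : root n a.
  have := congr1 (fun p => p.[a]) E; rewrite /= !(hornerM, horner_exp, hornerD, hornerN, hornerX, hornerC) subrr !mul0r.
  by move/eqP; rewrite mulf_eq0 orbb.
case/factor_theorem: ra => n1 En; subst n.
have Xa : 'X - a%:P != 0 by rewrite polyXsubC_eq0.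
have E1 : n1^+2 * ('X - a%:P) = ('X - b%:P) * d^+2.
  apply: (mulIf Xa); transitivity ((n1 * ('X - a%:P))^+2); first ring.
  by rewrite E; ring.
have rd : root d a.
  have := congr1 (fun p => p.[a]) E1; rewrite /= !(hornerM, horner_exp, hornerD, hornerN, hornerX, hornerC) subrr mulr0.
  move/esym/eqP; rewrite mulf_eq0 subr_eq0 (negbTE ab) /= mulf_eq0 orbb.
  by rewrite /root.
case/factor_theorem: rd => d1 Ed; subst d.
have -> : d1 = 0.
  apply: (IH d1 _ n1).
    move: Hd; have [->|d10] := eqVneq d1 0; first by rewrite size_poly0.
    by rewrite size_mul // size_XsubC addn2 /=.
  apply: (mulIf Xa); apply: (mulIf Xa).
  transitivity (n1 ^+ 2 * ('X - a%:P) * ('X - a%:P)); first ring.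
  by rewrite E1; ring.
by rewrite mul0r.
Qed.
Lemma frac_rep (R : idomainType) (x : {fraction R}) :
  exists n d : R, d != 0 /\ x = (FracField.tofrac n) / (FracField.tofrac d).
Proof.
elim/quotW: x => r.
have r2 : r.2 != 0 := denom_ratioP r.
exists r.1, r.2; split; first exact: r2.
have d0 : FracField.tofrac r.2 != 0 by rewrite tofrac_eq0.
apply: (mulIf d0); rewrite divfK //.
have H : forall n, FracField.tofrac n = \pi_({fraction R}) (Ratio n 1).
  by move=> n; unlock FracField.tofrac.
rewrite !H -[_ * _]FracField.pi_mul; apply/eqmodP => /=.
rewrite FracField.equivfE /FracField.mulf /= !numden_Ratio ?oner_eq0 ?mulf_neq0 //.
  by apply/eqP; ring.
all: by rewrite oner_eq0.
Qed.

Lemma frac_sq (F : fieldType) (x y : F) : y != 0 -> x * x = (x / y) * (x / y) * (y * y).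
Proof. by move=> y0; field. Qed.

Lemma nosq (R : realType) : ~ exists z : Cq R, z ^+ 2 = qF R ^+ 2 - qF R + 1.
Proof.
move=> [z Ez].
set a := omega R; have ha : a ^+ 2 - a + 1 = 0 := omega_rel R.
have ab : a != 1 - a.
  apply/eqP => e.
  have h3 : (2 * a - 1) ^+ 2 = 4 * (a ^+ 2 - a + 1) - 3 by ring.
  have : 2 * a - 1 = 0.
    have -> : 2 * a - 1 = a - (1 - a) by ring.
    by rewrite -e subrr.
  move=> h; move: h3; rewrite h ha expr2 mul0r mulr0 sub0r => /eqP.
  by rewrite eq_sym oppr_eq0 pnatr_eq0.
have hab : a * (1 - a) = 1.
  have -> : a * (1 - a) = 1 - (a ^+ 2 - a + 1) by ring.
  by rewrite ha subr0.
have hP : ('X - a%:P) * ('X - (1 - a)%:P) = 'X * 'X - 'X + 1 :> {poly CC R}.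
  transitivity ('X^2 - (a + (1 - a))%:P * 'X + (a * (1 - a))%:P).
    by rewrite polyCD polyCM; ring.
  have -> : a + (1 - a) = 1 by ring.
  by rewrite hab polyC1 mul1r.
have [n [d [d0 zE]]] := @frac_rep _ z.
have : FracField.tofrac (n ^+ 2) = FracField.tofrac (('X - a%:P) * ('X - (1 - a)%:P) * d ^+ 2).
  have td : FracField.tofrac d != 0 by rewrite tofrac_eq0.
  have Ez' : z * z = qF R * qF R - qF R + 1 by rewrite -!expr2.
  rewrite hP !tofracM ?tofracD ?tofracB ?tofracN ?tofrac1 ?tofracM -/(qF R) -Ez' zE.
  exact: frac_sq td.
move/eqP; rewrite tofrac_eq => /eqP /(@desc _ _ _ ab) d00.
by move: d0; rewrite d00 eqxx.
Qed.

Lemma make_sq (F : fieldType) (c e b y r P : F) : c * y ^+ 2 + e * y - b = 0 ->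
  r ^+ 2 * (e ^+ 2 + 4 * c * b) = P -> ((2 * c * y + e) * r) ^+ 2 = P.
Proof.
move=> H1 H2; rewrite -H2; apply/eqP; rewrite -subr_eq0.
have -> : ((2 * c * y + e) * r) ^+ 2 - r ^+ 2 * (e ^+ 2 + 4 * c * b) =
  4 * c * r ^+ 2 * (c * y ^+ 2 + e * y - b) by ring.
by rewrite H1 mulr0.
Qed.

Lemma case_Psi (F : fieldType) (q y : F) : q != 0 -> (2 : F) != 0 ->
  ((q - q^+2) * 0 + (-q) * q) * y ^+ 2
  + (((q - q^+2) * (-1) + (-q) * 0) - (q * 0 + (1 - q) * q)) * y
  - (q * (-1) + (1 - q) * 0) = 0 ->
  exists z : F, z ^+ 2 = q ^+ 2 - q + 1.
Proof.
move=> q0 t0 H; exists ((2 * ((q - q^+2) * 0 + (-q) * q) * y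
  + (((q - q^+2) * (-1) + (-q) * 0) - (q * 0 + (1 - q) * q))) * (2 * q)^-1).
apply: (@make_sq _ _ _ _ _ _ _ H).
by field; rewrite ?q0 ?t0 ?qW ?W0.
Qed.

Lemma case_PsiPM (F : fieldType) (q W y : F) : q != 0 -> (2 : F) != 0 ->
  q - W != 0 -> W != 0 -> W ^+ 2 - W + 1 = 0 ->
  ((1 - q) * 1 + (-1) * (- q + W)) * y ^+ 2
  + (((1 - q) * q^-1 + (-1) * (-1)) - (1 * 1 + ((1 + q^-1) / (q - W)) * (- q + W))) * y
  - (1 * q^-1 + ((1 + q^-1) / (q - W)) * (-1)) = 0 ->
  exists z : F, z ^+ 2 = q ^+ 2 - q + 1.
Proof.
move=> q0 t0 qW W0 rel H; exists ((2 * ((1 - q) * 1 + (-1) * (- q + W)) * y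
  + (((1 - q) * q^-1 + (-1) * (-1)) - (1 * 1 + ((1 + q^-1) / (q - W)) * (- q + W))))
  * (q * (q - W) / (2 * W))).
apply: (@make_sq _ _ _ _ _ _ _ H).
rewrite -[RHS]subr0 -(mulr0 (q / W)) -rel.
by field; rewrite ?q0 ?t0 ?qW ?W0.
Qed.

Lemma c0_Psi (F : fieldType) (q : F) : q != 0 -> (q - q^+2) * 0 + (-q) * q != 0.
Proof.
move=> q0; have -> : (q - q^+2) * 0 + (-q) * q = - (q * q) by ring.
by rewrite oppr_eq0 mulf_neq0.
Qed.

Lemma c0_PM (F : fieldType) (q W : F) : W ^+ 2 - W + 1 = 0 -> (1 - q) * 1 + (-1) * (- q + W) != 0.
Proof.
move=> h; have -> : (1 - q) * 1 + (-1) * (- q + W) = 1 - W by ring.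
exact: (@rel_neq1 _ _ h).
Qed.

Lemma qF0 (R : realType) : qF R != 0.
Proof. by rewrite /qF tofrac_eq0 polyX_eq0. Qed.

Lemma two0 (R : realType) : (2 : Cq R) != 0.
Proof.
have -> : (2 : Cq R) = FracField.tofrac (2%:R : {poly CC R}) by rewrite rmorph_nat.
by rewrite tofrac_eq0 -polyC_natr polyC_eq0 pnatr_eq0.
Qed.

Lemma Wfacts (R : realType) (w : which) :
  [/\ cst (om R w) != 0, qF R - cst (om R w) != 0 &
      cst (om R w) ^+ 2 - cst (om R w) + 1 = 0].
Proof.
have h := om_rel R w.
split.
- by rewrite /cst tofrac_eq0 polyC_eq0 (@rel_neq0 _ _ h).
- by rewrite /qF /cst -tofracB tofrac_eq0 polyXsubC_eq0.
have -> : cst (om R w) ^+ 2 - cst (om R w) + 1 = cst ((om R w) ^+ 2 - om R w + 1).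
  rewrite /cst !rmorphD ?rmorphN ?rmorphB ?rmorphXn ?rmorph1.
  by [].
by rewrite h /cst rmorph0.
Qed.

Theorem mainTheorem6 (R : realType) (w : which) (Phi : 'M[int]_2 -> 'M[Cq R]_2) :
  is_Phi w Phi ->
  ~ exists psi : P1 rat -> P1 (Cq R),
      forall (g : 'M[int]_2) (x : P1 rat), GL2Z g ->
        psi (mobZ g x) = mob (Phi g) (psi x).
Proof.
move=> [_ [Hmul [_ [_ [HS HV]]]]] [psi Hpsi].
have GV : GL2Z Vz by right; rewrite /Vz det2; ring.
have GS : GL2Z Sz by left; rewrite /Sz det2; ring.
have hU : Vz *m Sz = mx2 0 1 1 0.
  by rewrite /Vz /Sz mulmx2; congr mx2; ring.
have GU : GL2Z (Vz *m Sz) by right; rewrite hU det2; ring.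
have mU : mobZ (Vz *m Sz) (Some 1) = Some 1.
  rewrite hU /mobZ map_mx2 /mob !mx2E /=.
  by congr Some; rewrite !mulr1 intr0 add0r addr0 divr1.
have E := Hpsi _ (Some 1) GU; rewrite mU in E.
case: (Hmul _ _ GV GS) => k1 [k1n e1]; case: HV => k2 [k2n e2]; case: HS => k3 [k3n e3].
rewrite e1 e2 e3 (@mob_scale3 _ _ _ _ _ _ _ k1n k2n k3n) in E.
case: w E e2 e3 => E _ _.
- have [|y Hy] := @fix_quad _ (PhiV R Psi *m PhiS R Psi) _ _ (esym E).
    by rewrite /PhiV /PhiS mulmx2 !mx2E; apply: c0_Psi; apply: qF0.
  rewrite /PhiV /PhiS mulmx2 !mx2E in Hy.
  apply: (@nosq R); exact: (@case_Psi _ _ _ (qF0 R) (two0 R) Hy).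
- have [W0 qW Wrel] := Wfacts R PsiPlus.
  have [|y Hy] := @fix_quad _ (PhiV R PsiPlus *m PhiS R PsiPlus) _ _ (esym E).
    by rewrite /PhiV /PhiS mulmx2 !mx2E; apply: c0_PM.
  rewrite /PhiV /PhiS mulmx2 !mx2E in Hy.
  apply: (@nosq R); exact: (@case_PsiPM _ _ _ _ (qF0 R) (two0 R) qW W0 Wrel Hy).
- have [W0 qW Wrel] := Wfacts R PsiMinus.
  have [|y Hy] := @fix_quad _ (PhiV R PsiMinus *m PhiS R PsiMinus) _ _ (esym E).
    by rewrite /PhiV /PhiS mulmx2 !mx2E; apply: c0_PM.
  rewrite /PhiV /PhiS mulmx2 !mx2E in Hy.
  apply: (@nosq R); exact: (@case_PsiPM _ _ _ _ (qF0 R) (two0 R) qW W0 Wrel Hy).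
Qed.
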